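(* (1) If $U[-1]\to A\overset{f}{\to}B\to U$ is a distinguished triangle in $\mathscr{C}$ with $U\in\mathcal{U}$, then $A\in\mathscr{C}^-$ implies $B\in\mathscr{C}^-$. (2) If $S[-1]\to A\overset{f}{\to}B\to S$ is a distinguished triangle in $\mathscr{C}$ with $S\in\mathcal{S}$, then $B\in\mathscr{C}^-$ implies $A\in\mathscr{C}^-$.
   Context: $\mathscr{C}$ is a triangulated category with shift $[1]$; subcategories are full, additive, closed under isomorphisms and direct summands. $\mathrm{Ext}^1(X,Y)=\mathscr{C}(X,Y[1])$. $\mathcal{M}\ast\mathcal{N}$ is the full subcategory of objects $C$ admitting a distinguished triangle $M\to C\to N\to M[1]$ with $M\in\mathcal{M}$, $N\in\mathcal{N}$. A cotorsion pair $(\mathcal{U},\mathcal{V})$: $\mathrm{Ext}^1(\mathcal{U},\mathcal{V})=0$ and $\mathscr{C}=\mathcal{U}\ast\mathcal{V}[1]$. Fix a twin cotorsion pair, i.e. cotorsion pairs $(\mathcal{S},\mathcal{T}),(\mathcal{U},\mathcal{V})$ with $\mathrm{Ext}^1(\mathcal{S},\mathcal{V})=0$. Put $\mathcal{W}=\mathcal{T}\cap\mathcal{U}$ and $\mathscr{C}^-=\mathcal{S}[-1]\ast\mathcal{W}$. *)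

(* Defs.v *)
From HB Require Import structures.
From mathcomp Require Import all_boot all_algebra.
Set Implicit Arguments.
Unset Strict Implicit.
Unset Printing Implicit Defensive.
Import GRing.Theory.
Local Open Scope ring_scope.

Record PreTri := {
  Obj : Type;
  Mor : Obj -> Obj -> zmodType;
  comp : forall X Y Z : Obj, Mor Y Z -> Mor X Y -> Mor X Z;
  idm : forall X : Obj, Mor X X;
  sh : Obj -> Obj;
  shm : forall X Y : Obj, Mor X Y -> Mor (sh X) (sh Y);
  shinv : Obj -> Obj;
  dist : forall X Y Z : Obj, Mor X Y -> Mor Y Z -> Mor Z (sh X) -> Prop
}.

Arguments Obj : clear implicits.
Arguments Mor : clear implicits.
Arguments comp {p X Y Z}.
Arguments idm {p}.
Arguments sh {p}.
Arguments shm {p X Y}.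
Arguments shinv {p}.
Arguments dist {p X Y Z}.

Section Defs.
Variable C : PreTri.
Local Notation Ob := (Obj C).
Local Notation "g \o f" := (comp g f).

Definition is_iso (X Y : Ob) (f : Mor C X Y) : Prop :=
  exists g : Mor C Y X, g \o f = idm X /\ f \o g = idm Y.

Definition isomorphic (X Y : Ob) : Prop := exists f : Mor C X Y, is_iso f.

Definition is_zero (Z : Ob) : Prop :=
  (forall X (f g : Mor C Z X), f = g) /\ (forall X (f g : Mor C X Z), f = g).

Definition is_biproduct (X Y P : Ob) : Prop :=
  exists (i1 : Mor C X P) (i2 : Mor C Y P) (p1 : Mor C P X) (p2 : Mor C P Y),
    [/\ p1 \o i1 = idm X, p2 \o i2 = idm Y, p1 \o i2 = 0, p2 \o i1 = 0
      & (i1 \o p1) + (i2 \o p2) = idm P].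

Definition category_axioms : Prop :=
  [/\ (forall X Y Z W (f : Mor C X Y) (g : Mor C Y Z) (h : Mor C Z W),
          h \o (g \o f) = (h \o g) \o f),
      (forall X Y (f : Mor C X Y), idm Y \o f = f),
      (forall X Y (f : Mor C X Y), f \o idm X = f),
      (forall X Y Z (f : Mor C X Y) (g g' : Mor C Y Z), (g + g') \o f = (g \o f) + (g' \o f))
    & (forall X Y Z (f f' : Mor C X Y) (g : Mor C Y Z), g \o (f + f') = (g \o f) + (g \o f'))].

Definition additive_axioms : Prop :=
  (exists Z, is_zero Z) /\ (forall X Y, exists P, is_biproduct X Y P).

(* [1] is an additive autoequivalence; shinv X is a chosen object X[-1]
   with X[-1][1] isomorphic to X. *)
Definition shift_axioms : Prop :=
  (forall X : Ob, shm (idm X) = idm (sh X)) /\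
  (forall X Y Z (f : Mor C X Y) (g : Mor C Y Z), shm (g \o f) = shm g \o shm f) /\
  (forall X Y (f f' : Mor C X Y), shm (f + f') = (shm f) + (shm f')) /\
  (forall X Y, injective (@shm C X Y)) /\
  (forall X Y (g : Mor C (sh X) (sh Y)), exists f, shm f = g) /\
  (forall X, isomorphic (sh (shinv X)) X).

Definition TR1 : Prop :=
  [/\
      (forall X Y Z X' Y' Z' (u : Mor C X Y) (v : Mor C Y Z) (w : Mor C Z (sh X))
              (u' : Mor C X' Y') (v' : Mor C Y' Z') (w' : Mor C Z' (sh X'))
              (a : Mor C X X') (b : Mor C Y Y') (c : Mor C Z Z'),
          is_iso a -> is_iso b -> is_iso c ->
          b \o u = u' \o a -> c \o v = v' \o b -> shm a \o w = w' \o c ->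
          dist u v w -> dist u' v' w'),
      (forall X Z, is_zero Z -> dist (idm X) (0 : Mor C X Z) (0 : Mor C Z (sh X)))
    & (forall X Y (u : Mor C X Y), exists Z (v : Mor C Y Z) (w : Mor C Z (sh X)), dist u v w)].

Definition TR2 : Prop :=
  forall X Y Z (u : Mor C X Y) (v : Mor C Y Z) (w : Mor C Z (sh X)),
    dist u v w <-> dist v w (- shm u).

Definition TR3 : Prop :=
  forall X Y Z X' Y' Z' (u : Mor C X Y) (v : Mor C Y Z) (w : Mor C Z (sh X))
         (u' : Mor C X' Y') (v' : Mor C Y' Z') (w' : Mor C Z' (sh X'))
         (a : Mor C X X') (b : Mor C Y Y'),
    dist u v w -> dist u' v' w' -> b \o u = u' \o a ->
    exists c : Mor C Z Z', c \o v = v' \o b /\ shm a \o w = w' \o c.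

Definition TR4 : Prop :=
  forall X Y Z Z' X' Y' (u : Mor C X Y) (v : Mor C Y Z)
         (j : Mor C Y Z') (k : Mor C Z' (sh X))
         (l : Mor C Z X') (i : Mor C X' (sh Y))
         (m : Mor C Z Y') (n : Mor C Y' (sh X)),
    dist u j k -> dist v l i -> dist (v \o u) m n ->
    exists (f : Mor C Z' Y') (g : Mor C Y' X'),
      [/\ dist f g (shm j \o i),
          f \o j = m \o v, n \o f = k, g \o m = l & i \o g = shm u \o n].

Definition triangulated : Prop :=
  category_axioms /\ additive_axioms /\ shift_axioms /\ TR1 /\ TR2 /\ TR3 /\ TR4.

Definition subcat (D : Ob -> Prop) : Prop :=
  [/\ (forall X Y, D X -> isomorphic X Y -> D Y),
      (forall Z, is_zero Z -> D Z),
      (forall X Y P, is_biproduct X Y P -> D X -> D Y -> D P)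
    & (forall X Y P, is_biproduct X Y P -> D P -> D X)].

Definition shift1 (D : Ob -> Prop) (X : Ob) : Prop :=
  exists V, D V /\ isomorphic X (sh V).
Definition shiftm1 (D : Ob -> Prop) (X : Ob) : Prop :=
  exists S, D S /\ isomorphic X (shinv S).

Definition star (M N : Ob -> Prop) (X : Ob) : Prop :=
  exists Mo No (a : Mor C Mo X) (b : Mor C X No) (c : Mor C No (sh Mo)),
    [/\ M Mo, N No & dist a b c].

Definition Ext1_vanish (M N : Ob -> Prop) : Prop :=
  forall X Y, M X -> N Y -> forall f : Mor C X (sh Y), f = 0.

Definition cotorsion_pair (U V : Ob -> Prop) : Prop :=
  [/\ subcat U, subcat V, Ext1_vanish U V & forall X, star U (shift1 V) X].

Definition twin_cotorsion_pair (S T U V : Ob -> Prop) : Prop :=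
  [/\ cotorsion_pair S T, cotorsion_pair U V & Ext1_vanish S V].

Definition heartW (T U : Ob -> Prop) (X : Ob) : Prop := T X /\ U X.

Definition Cminus (S T U : Ob -> Prop) : Ob -> Prop :=
  star (shiftm1 S) (heartW T U).

End Defs.

(* Main.v *)
Require Import Defs.
From mathcomp Require Import all_boot all_algebra.


Set Implicit Arguments. Unset Strict Implicit. Unset Printing Implicit Defensive.
Import GRing.Theory.
Local Open Scope ring_scope.

Section Tri.
Variable C : PreTri.
Hypothesis HC : triangulated C.
Local Notation Ob := (Obj C).
Local Notation "g ⊚ f" := (Defs.comp g f) (at level 40, left associativity).
Implicit Types X Y Z W : Ob.

Lemma hcat : category_axioms C. Proof. by case: HC. Qed.
Lemma hadd : additive_axioms C. Proof. by case: HC => _ []. Qed.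
Lemma hsh : shift_axioms C. Proof. by case: HC => _ [] _ []. Qed.
Lemma htr1 : TR1 C. Proof. by case: HC => _ [] _ [] _ []. Qed.
Lemma htr2 : TR2 C. Proof. by case: HC => _ [] _ [] _ [] _ []. Qed.
Lemma htr3 : TR3 C. Proof. by case: HC => _ [] _ [] _ [] _ [] _ []. Qed.
Lemma htr4 : TR4 C. Proof. by case: HC => _ [] _ [] _ [] _ [] _ [] _. Qed.

Lemma compA X Y Z W (f : Mor C X Y) (g : Mor C Y Z) (h : Mor C Z W) :
  h ⊚ (g ⊚ f) = (h ⊚ g) ⊚ f.
Proof. by case: hcat => H _ _ _ _; apply: H. Qed.
Lemma comp1l X Y (f : Mor C X Y) : (@idm C Y) ⊚ f = f.
Proof. by case: hcat => _ H _ _ _; apply: H. Qed.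
Lemma comp1r X Y (f : Mor C X Y) : f ⊚ (@idm C X) = f.
Proof. by case: hcat => _ _ H _ _; apply: H. Qed.
Lemma compDl X Y Z (f : Mor C X Y) (g g' : Mor C Y Z) : (g + g') ⊚ f = g ⊚ f + g' ⊚ f.
Proof. by case: hcat => _ _ _ H _; apply: H. Qed.
Lemma compDr X Y Z (f f' : Mor C X Y) (g : Mor C Y Z) : g ⊚ (f + f') = g ⊚ f + g ⊚ f'.
Proof. by case: hcat => _ _ _ _ H; apply: H. Qed.
Lemma comp0l X Y Z (f : Mor C X Y) : (0 : Mor C Y Z) ⊚ f = 0.
Proof. apply: (addrI ((0 : Mor C Y Z) ⊚ f)); by rewrite -compDl !addr0. Qed.
Lemma comp0r X Y Z (g : Mor C Y Z) : g ⊚ (0 : Mor C X Y) = 0.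
Proof. apply: (addrI (g ⊚ (0 : Mor C X Y))); by rewrite -compDr !addr0. Qed.
Lemma compNl X Y Z (f : Mor C X Y) (g : Mor C Y Z) : (- g) ⊚ f = - (g ⊚ f).
Proof. apply: (addrI (g ⊚ f)); by rewrite -compDl !subrr comp0l. Qed.
Lemma compNr X Y Z (f : Mor C X Y) (g : Mor C Y Z) : g ⊚ (- f) = - (g ⊚ f).
Proof. apply: (addrI (g ⊚ f)); by rewrite -compDr !subrr comp0r. Qed.
Lemma compBl X Y Z (f : Mor C X Y) (g g' : Mor C Y Z) : (g - g') ⊚ f = g ⊚ f - g' ⊚ f.
Proof. by rewrite compDl compNl. Qed.
Lemma compBr X Y Z (f f' : Mor C X Y) (g : Mor C Y Z) : g ⊚ (f - f') = g ⊚ f - g ⊚ f'.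
Proof. by rewrite compDr compNr. Qed.

Lemma shm1 X : shm (@idm C X) = idm (sh X).
Proof. by case: hsh => H _; apply: H. Qed.
Lemma shmC X Y Z (f : Mor C X Y) (g : Mor C Y Z) : shm (g ⊚ f) = shm g ⊚ shm f.
Proof. by case: hsh => _ [H _]; apply: H. Qed.
Lemma shmD X Y (f f' : Mor C X Y) : shm (f + f') = shm f + shm f'.
Proof. by case: hsh => _ [_ [H _]]; apply: H. Qed.
Lemma shm_inj X Y : injective (@shm C X Y).
Proof. by case: hsh => _ [_ [_ [H _]]]; apply: H. Qed.
Lemma shm_full X Y (g : Mor C (sh X) (sh Y)) : exists f, shm f = g.
Proof. by case: hsh => _ [_ [_ [_ [H _]]]]; apply: H. Qed.
Lemma shinv_iso X : isomorphic (sh (shinv X)) X.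
Proof. by case: hsh => _ [_ [_ [_ [_ H]]]]; apply: H. Qed.
Lemma shm0 X Y : shm (0 : Mor C X Y) = 0.
Proof. apply: (addrI (shm (0 : Mor C X Y))); by rewrite -shmD !addr0. Qed.
Lemma shmN X Y (f : Mor C X Y) : shm (- f) = - shm f.
Proof. apply: (addrI (shm f)); by rewrite -shmD !subrr shm0. Qed.

Lemma compKl X Y Z W (f : Mor C X Y) (g : Mor C Y Z) (h : Mor C Z W) k :
  h ⊚ g = k -> h ⊚ (g ⊚ f) = k ⊚ f.
Proof. by move=> <-; rewrite compA. Qed.

Lemma is_iso_id X : is_iso (@idm C X).
Proof. by exists (@idm C X); rewrite comp1l. Qed.
Lemma iso_refl X : isomorphic X X.
Proof. exists (@idm C X); exact: is_iso_id. Qed.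
Lemma iso_sym X Y : isomorphic X Y -> isomorphic Y X.
Proof. by move=> [f [g [h1 h2]]]; exists g; exists f. Qed.
Lemma is_iso_comp X Y Z (f : Mor C X Y) (g : Mor C Y Z) :
  is_iso f -> is_iso g -> is_iso (g ⊚ f).
Proof.
move=> [f' [f1 f2]] [g' [g1 g2]]; exists (f' ⊚ g'); split.
  by rewrite -compA (compKl _ g1) comp1l.
by rewrite -compA (compKl _ f2) comp1l.
Qed.
Lemma iso_trans X Y Z : isomorphic X Y -> isomorphic Y Z -> isomorphic X Z.
Proof. move=> [f Hf] [g Hg]; exists (g ⊚ f); exact: is_iso_comp. Qed.
Lemma is_iso_shm X Y (f : Mor C X Y) : is_iso f -> is_iso (shm f).
Proof. by move=> [g [h1 h2]]; exists (shm g); rewrite -!shmC h1 h2 !shm1. Qed.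
Lemma iso_shm X Y : isomorphic X Y -> isomorphic (sh X) (sh Y).
Proof. by move=> [f Hf]; exists (shm f); exact: is_iso_shm. Qed.
Lemma iso_unshm X Y : isomorphic (sh X) (sh Y) -> isomorphic X Y.
Proof.
move=> [f [g [h1 h2]]].
have [f0 Ef] := shm_full f; have [g0 Eg] := shm_full g; subst f g.
exists f0; exists g0; split; apply: shm_inj; by rewrite shmC shm1.
Qed.
Lemma is_iso_N X Y (f : Mor C X Y) : is_iso f -> is_iso (- f).
Proof. by move=> [g [h1 h2]]; exists (- g); split; rewrite compNl compNr opprK. Qed.


Lemma tr1_iso X Y Z X' Y' Z' (u : Mor C X Y) (v : Mor C Y Z) (w : Mor C Z (sh X))
  (u' : Mor C X' Y') (v' : Mor C Y' Z') (w' : Mor C Z' (sh X'))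
  (a : Mor C X X') (b : Mor C Y Y') (c : Mor C Z Z') :
  is_iso a -> is_iso b -> is_iso c ->
  b ⊚ u = u' ⊚ a -> c ⊚ v = v' ⊚ b -> shm a ⊚ w = w' ⊚ c ->
  dist u v w -> dist u' v' w'.
Proof. by case: htr1 => H _ _; apply: H. Qed.
Lemma tr1_zero X Z : is_zero Z -> dist (@idm C X) (0 : Mor C X Z) (0 : Mor C Z (sh X)).
Proof. by case: htr1 => _ H _; apply: H. Qed.
Lemma tr1_ex X Y (u : Mor C X Y) : exists Z (v : Mor C Y Z) (w : Mor C Z (sh X)), dist u v w.
Proof. by case: htr1 => _ _ H; apply: H. Qed.
Lemma rot X Y Z (u : Mor C X Y) (v : Mor C Y Z) (w : Mor C Z (sh X)) :
  dist u v w -> dist v w (- shm u).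
Proof. exact: (proj1 (htr2 u v w)). Qed.
Lemma unrot X Y Z (u : Mor C X Y) (v : Mor C Y Z) (w : Mor C Z (sh X)) :
  dist v w (- shm u) -> dist u v w.
Proof. exact: (proj2 (htr2 u v w)). Qed.
Lemma tr3 X Y Z X' Y' Z' (u : Mor C X Y) (v : Mor C Y Z) (w : Mor C Z (sh X))
  (u' : Mor C X' Y') (v' : Mor C Y' Z') (w' : Mor C Z' (sh X'))
  (a : Mor C X X') (b : Mor C Y Y') :
  dist u v w -> dist u' v' w' -> b ⊚ u = u' ⊚ a ->
  exists c : Mor C Z Z', c ⊚ v = v' ⊚ b /\ shm a ⊚ w = w' ⊚ c.
Proof. exact: htr3. Qed.
Lemma zero_ex : exists Z, is_zero Z.
Proof. by case: hadd. Qed.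

Lemma dist_comp0 X Y Z (u : Mor C X Y) (v : Mor C Y Z) (w : Mor C Z (sh X)) :
  dist u v w -> v ⊚ u = 0.
Proof.
move=> D; have [Z0 HZ] := zero_ex.
have [c [Hc _]] := tr3 (tr1_zero X HZ) D (erefl (u ⊚ @idm C X)).
by rewrite -Hc comp0r.
Qed.

Lemma exact_cov X Y Z (u : Mor C X Y) (v : Mor C Y Z) (w : Mor C Z (sh X)) T (g : Mor C T Y) :
  dist u v w -> v ⊚ g = 0 -> exists h, g = u ⊚ h.
Proof.
move=> D vg; have [Z0 HZ] := zero_ex.
have D0 := rot (tr1_zero T HZ).
have E : (0 : Mor C Z0 Z) ⊚ (0 : Mor C T Z0) = v ⊚ g by rewrite comp0l vg.
have [c [_ Hc]] := tr3 D0 (rot D) E.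
have [h Eh] := shm_full c; subst c; exists h; apply: shm_inj.
by move: Hc; rewrite shm1 compNr comp1r compNl -shmC => /oppr_inj.
Qed.

Lemma BR X Y Z (u : Mor C X Y) (v : Mor C Y Z) (w : Mor C Z (sh X)) :
  dist u v w -> exists (x : Mor C (shinv Z) X) (w' : Mor C Y (sh (shinv Z))), dist x u w'.
Proof.
move=> D; have [phi [psi [h1 h2]]] := shinv_iso Z.
have D1 : dist u (psi ⊚ v) (w ⊚ phi).
  apply: (tr1_iso (a := @idm C X) (b := @idm C Y) (c := psi) _ _ _ _ _ _ D).
  - exact: is_iso_id.
  - exact: is_iso_id.
  - by exists phi.
  - by rewrite comp1l comp1r.
  - by rewrite comp1r.
  - by rewrite shm1 comp1l -compA h2 comp1r.
have [x0 Ex] := shm_full (w ⊚ phi).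
exists (- x0), (psi ⊚ v); apply: unrot; by rewrite shmN opprK Ex.
Qed.

Lemma exact_contra X Y Z (u : Mor C X Y) (v : Mor C Y Z) (w : Mor C Z (sh X)) T (g : Mor C Y T) :
  dist u v w -> g ⊚ u = 0 -> exists h : Mor C Z T, h ⊚ v = g.
Proof.
move=> D gu; have [Z0 HZ] := zero_ex.
have [x [w'' D0]] := BR (tr1_zero T HZ).
have E : g ⊚ u = x ⊚ (0 : Mor C X (shinv Z0)) by rewrite comp0r gu.
have [c [Hc _]] := tr3 D D0 E; exists c; by rewrite Hc comp1l.
Qed.


Lemma tr4 X Y Z Z' X' Y' (u : Mor C X Y) (v : Mor C Y Z) (j : Mor C Y Z') (k : Mor C Z' (sh X))
  (l : Mor C Z X') (i : Mor C X' (sh Y)) (m : Mor C Z Y') (n : Mor C Y' (sh X)) :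
  dist u j k -> dist v l i -> dist (v ⊚ u) m n ->
  exists (f : Mor C Z' Y') (g : Mor C Y' X'),
    [/\ dist f g (shm j ⊚ i), f ⊚ j = m ⊚ v, n ⊚ f = k, g ⊚ m = l & i ⊚ g = shm u ⊚ n].
Proof. exact: htr4. Qed.

Lemma five X Y Z X' Y' Z' (u : Mor C X Y) (v : Mor C Y Z) (w : Mor C Z (sh X))
  (u' : Mor C X' Y') (v' : Mor C Y' Z') (w' : Mor C Z' (sh X'))
  (a : Mor C X X') (b : Mor C Y Y') (c : Mor C Z Z') :
  dist u v w -> dist u' v' w' -> is_iso a -> is_iso b ->
  b ⊚ u = u' ⊚ a -> c ⊚ v = v' ⊚ b -> shm a ⊚ w = w' ⊚ c -> is_iso c.
Proof.
move=> D D' [ai [ai1 ai2]] [bi [bi1 bi2]] Eu Ev Ew.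
have Hu : bi ⊚ u' = u ⊚ ai.
  have -> : u ⊚ ai = (bi ⊚ b) ⊚ (u ⊚ ai) by rewrite bi1 comp1l.
  by rewrite -compA [b ⊚ _]compA Eu -compA ai2 comp1r.
have inj : forall T (z : Mor C T Z), c ⊚ z = 0 -> z = 0.
  move=> T z cz.
  have wz : w ⊚ z = 0.
    have E1 : shm a ⊚ (w ⊚ z) = 0 by rewrite compA Ew -compA cz comp0r.
    have := congr1 (fun t => shm ai ⊚ t) E1.
    by rewrite /= comp0r compA -shmC ai1 shm1 comp1l.
  have [y Ey] := exact_cov (rot D) wz.
  have vby : v' ⊚ (b ⊚ y) = 0 by rewrite compA -Ev -compA -Ey cz.
  have [x' Ex'] := exact_cov D' vby.
  have Ey2 : y = u ⊚ (ai ⊚ x').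
    have := congr1 (fun t => bi ⊚ t) Ex'.
    by rewrite /= compA bi1 comp1l compA Hu -compA.
  by rewrite Ey Ey2 compA (dist_comp0 D) comp0l.
have Hw' : shm u' ⊚ w' = 0.
  by apply: oppr_inj; rewrite -compNl (dist_comp0 (rot (rot D'))) oppr0.
have surj : forall T (z' : Mor C T Z'), exists z, c ⊚ z = z'.
  move=> T z'.
  have up : (- shm u) ⊚ (shm ai ⊚ (w' ⊚ z')) = 0.
    rewrite compNl compA -shmC -Hu shmC -compA [shm u' ⊚ _]compA Hw'.
    by rewrite comp0l comp0r oppr0.
  have [z0 Ez0] := exact_cov (rot (rot D)) up.
  have Hd : w' ⊚ (z' - c ⊚ z0) = 0.
    by rewrite compBr compA -Ew -compA -Ez0 compA -shmC ai2 shm1 comp1l subrr.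
  have [y Ey] := exact_cov (rot D') Hd.
  exists (z0 + v ⊚ (bi ⊚ y)).
  by rewrite compDr compA Ev -compA [b ⊚ _]compA bi2 comp1l -Ey addrC subrK.
have [d Ed] := surj _ (@idm C Z').
exists d; split => //.
apply/eqP; rewrite -subr_eq0; apply/eqP; apply: inj.
by rewrite compBr compA Ed comp1l comp1r subrr.
Qed.

Lemma retract_biprod M X (a : Mor C M X) (s : Mor C X M) :
  a ⊚ s = @idm C X -> exists Y, is_biproduct X Y M.
Proof.
move=> as1.
have [Y [p2 [w D]]] := tr1_ex s.
have Dr := rot D.
have w0 : w = 0.
  have E : (- shm s) ⊚ w = 0 := dist_comp0 (rot Dr).
  have E2 : shm s ⊚ w = 0 by apply: oppr_inj; rewrite -compNl E oppr0.
  by rewrite -[w]comp1l -shm1 -as1 shmC -compA E2 comp0r.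
have [i0 Ei0] : exists i0, @idm C Y = p2 ⊚ i0.
  by apply: (exact_cov Dr); rewrite w0 comp0l.
set i2 := i0 - s ⊚ (a ⊚ i0).
have p2s : p2 ⊚ s = 0 := dist_comp0 D.
have ai2 : a ⊚ i2 = 0 by rewrite /i2 compBr compA as1 comp1l subrr.
have p2i2 : p2 ⊚ i2 = @idm C Y by rewrite /i2 compBr compA p2s comp0l subr0 -Ei0.
exists Y, s, i2, a, p2; split => //.
set e := @idm C M - s ⊚ a - i2 ⊚ p2.
have pe : p2 ⊚ e = 0.
  by rewrite /e !compBr comp1r compA p2s comp0l subr0 compA p2i2 comp1l subrr.
have [g Eg] := exact_cov D pe.
have ae : a ⊚ e = 0.
  by rewrite /e !compBr comp1r compA as1 comp1l compA ai2 comp0l subrr subr0.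
have g0 : g = 0 by rewrite -[g]comp1l -as1 -compA -Eg ae.
have : e = 0 by rewrite Eg g0 comp0r.
by move=> /eqP; rewrite /e -addrA -opprD subr_eq0 => /eqP ->.
Qed.

Section Cot.
Variables P Q : Ob -> Prop.
Hypothesis Hcp : cotorsion_pair P Q.

Lemma left_iso X Y : P X -> isomorphic X Y -> P Y.
Proof. by case: Hcp => [[H _ _ _] _ _ _]; apply: H. Qed.
Lemma right_iso X Y : Q X -> isomorphic X Y -> Q Y.
Proof. by case: Hcp => [_ [H _ _ _] _ _]; apply: H. Qed.

Lemma left_char X : (forall Y, Q Y -> forall f : Mor C X (sh Y), f = 0) -> P X.
Proof.
move=> H; case: Hcp => sP _ _ dec.
have [Mo [No [a [b [c [PM [V1 [QV [psi [psii [h1 h2]]]]] D]]]]]] := dec X.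
have b0 : b = 0.
  have E := H _ QV (psi ⊚ b).
  by rewrite -[b]comp1l -h1 -compA E comp0r.
have E0 : b ⊚ @idm C X = 0 by rewrite b0 comp0l.
have [s Es] := exact_cov D E0.
have [Y HY] := retract_biprod (esym Es).
by case: sP => _ _ _ Hsum; exact: Hsum _ _ _ HY PM.
Qed.

Lemma left_ext X : star P P X -> P X.
Proof.
move=> [X1 [X2 [a [b [c [P1 P2 D]]]]]].
apply: left_char => Y QY f.
case: Hcp => _ _ ext _.
have fa : f ⊚ a = 0 := ext _ _ P1 QY _.
have [g Eg] := exact_contra D fa.
by rewrite -Eg (ext _ _ P2 QY g) comp0l.
Qed.
End Cot.


Section Main.
Variables S T U V : Ob -> Prop.
Hypothesis Htw : twin_cotorsion_pair S T U V.
Lemma cpST : cotorsion_pair S T. Proof. by case: Htw. Qed.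
Lemma cpUV : cotorsion_pair U V. Proof. by case: Htw. Qed.

Lemma S_sub_U X : S X -> U X.
Proof.
move=> SX; apply: (left_char cpUV) => Y VY f.
by case: Htw => _ _ E; exact: E _ _ SX VY f.
Qed.

Lemma shinv_S X : S X -> S (sh (shinv X)).
Proof. move=> SX; apply: (left_iso cpST SX); apply: iso_sym; exact: shinv_iso. Qed.

Lemma shM_S M : shiftm1 S M -> S (sh M).
Proof.
move=> [S1 [SS1 HMi]]; apply: (left_iso cpST SS1); apply: iso_sym.
exact: iso_trans (iso_shm HMi) (shinv_iso S1).
Qed.

Lemma part2 A B S0 (f : Mor C A B) : S S0 ->
  (exists (u : Mor C (shinv S0) A) (w : Mor C B (sh (shinv S0))), dist u f w) ->
  Cminus S T U B -> Cminus S T U A.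
Proof.
move=> SS0 [u [w D]] [M [W [m [b [c [HM HW DB]]]]]].
have [Z [p [q Dz]]] := tr1_ex (b ⊚ f).
have [f1 [g1 [D4 _ _ _ _]]] := tr4 (rot D) (rot DB) Dz.
have SZ : S Z.
  apply: (left_ext cpST); exists (sh (shinv S0)), (sh M), f1, g1, (shm w ⊚ - shm m); split.
  - exact: shinv_S.
  - exact: shM_S.
  - exact: D4.
have [x [w' Dx]] := BR Dz.
exists (shinv Z), W, x, (b ⊚ f), w'; split => //.
exists Z; split => //; exact: iso_refl.
Qed.

Lemma part1 A B U0 (f : Mor C A B) : U U0 ->
  (exists (u : Mor C (shinv U0) A) (w : Mor C B (sh (shinv U0))), dist u f w) ->
  Cminus S T U A -> Cminus S T U B.
Proof.
move=> UU0 [u [w D]] [M [W [m [b [c [HM [TW UW] DA]]]]]].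
have [Y [p [q DY]]] := tr1_ex (f ⊚ m).
have [f1 [g1 [D4 _ _ _ _]]] := tr4 DA (rot D) DY.
have UY : U Y.
  apply: (left_ext cpUV); exists W, (sh (shinv U0)), f1, g1, (shm b ⊚ - shm u); split.
  - exact: UW.
  - apply: (left_iso cpUV UU0); apply: iso_sym; exact: shinv_iso.
  - exact: D4.
have [S2 [N [al [be [ga [SS2 [T2 [TT2 HN]] Dsh]]]]]] : star S (shift1 T) (sh Y).
  by case: cpST => _ _ _ dec; apply: dec.
have [phi Hphi] := shinv_iso S2.
have [y0 Ey0] := shm_full (al ⊚ phi).
have [R [t [s0 DR]]] := tr1_ex y0.
have D3 := rot (rot (rot DR)).
have E : @idm C (sh Y) ⊚ (- shm y0) = al ⊚ (- phi) by rewrite comp1l compNr Ey0.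
have [cc [Ec1 Ec2]] := tr3 D3 Dsh E.
have isoc : is_iso cc := five D3 Dsh (is_iso_N Hphi) (is_iso_id _) E Ec1 Ec2.
have TR : T R.
  have i1 : isomorphic (sh R) (sh T2) := iso_trans (ex_intro _ cc isoc) HN.
  apply: (right_iso cpST TT2); apply: iso_sym; exact: iso_unshm i1.
have UR : U R.
  apply: (left_ext cpUV); exists Y, (sh (shinv S2)), t, s0, (- shm y0); split.
  - exact: UY.
  - apply: S_sub_U; exact: shinv_S.
  - exact: rot DR.
have [Z [p' [q' DZ]]] := tr1_ex (t ⊚ p).
have [f2 [g2 [D5 _ _ _ _]]] := tr4 (rot DY) (rot DR) DZ.
have SZ : S Z.
  apply: (left_ext cpST); exists (sh M), (sh (shinv S2)), f2, g2, (shm q ⊚ - shm y0); split.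
  - exact: shM_S.
  - exact: shinv_S.
  - exact: D5.
have [x [w' Dx]] := BR DZ.
exists (shinv Z), R, x, (t ⊚ p), w'; split => //.
exists Z; split => //; exact: iso_refl.
Qed.
End Main.

End Tri.

Theorem lemma2p12 (C : PreTri) (HC : triangulated C)
  (S T U V : Obj C -> Prop) (Htw : twin_cotorsion_pair S T U V) :
  (forall (A B U0 : Obj C) (f : Mor C A B),
      U U0 ->
      (exists (u : Mor C (shinv U0) A) (w : Mor C B (sh (shinv U0))), dist u f w) ->
      Cminus S T U A -> Cminus S T U B)
  /\
  (forall (A B S0 : Obj C) (f : Mor C A B),
      S S0 ->
      (exists (u : Mor C (shinv S0) A) (w : Mor C B (sh (shinv S0))), dist u f w) ->
      Cminus S T U B -> Cminus S T U A).
Proof.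
split; [exact: (part1 HC Htw) | exact: (part2 HC Htw)].
Qed.
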